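(* Let $f$ be in Model-2 (defined below) and assume $Z_\pm\in\mathbb{R}$. Then $\beta_2^{\min}\le 0\le\min\{Y_-,R_0,\lambda\}\le\beta_2^{\max}\le\beta_2^{hi}$. If moreover $Y_-\le R_0\le Z_+$, $Y_-\le\lambda\le Z_+$ and $Z_+>0$, then $[0,Y_-]\subset\mathcal{B}_f^-$ and $[\beta_1^{lo},Z_+]=\mathcal{B}_f^+$; hence $f$ is admissible.
   Context: Model-2: $f(X,I)=\sum_{i,j=0}^2f_{ij}X^iI^j$ with real coefficients satisfying $f_{20}=f_{22}=0$, $f_{21}=-\kappa<0$, $f_{02}\le0$, $f_{10}\le0$, $f_{11}+f_{12}\le0$, $f_{00}\ge0$, $\lambda:=f_{00}+f_{01}+f_{02}\ge0$, and $f_{12}=-\kappa Y_-$ where $Y_-:=\frac12\big(-(f_{11}+f_{12})-\sqrt{(f_{11}+f_{12})^2+4f_{02}}\big)$ is real. Thus $f=f_0(I)+f_1(I)X+f_2(I)X^2$ with $f_0=f_{00}+f_{01}I+f_{02}I^2$, $f_1=f_{10}+f_{11}I+f_{12}I^2$, $f_2=f_{21}I$. Put $P_f(I):=(f_0(I)-\lambda I)/(1-I)=f_{00}-f_{02}I$, $h_f(z,I):=P_f(I)+zf_1(I)+z^2(I+(1-I)f_2(I))$, $\mathcal{B}_f^+:=\{z\ge\lambda:h_f(z,I)\le0\ \forall I\in[0,1]\}$, $\mathcal{B}_f^-:=\{z\le\lambda:h_f(z,I)\ge0\ \forall I\in[0,1]\}$. A pair $(\beta_1,\beta_2)$, $\beta_1>\beta_2$,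 is $f$-compatible if $\beta_2\le\lambda\le\beta_1$ and $h_f(\beta_i,I)/(\beta_j-\beta_i)\ge0$ for all $I\in[0,1]$, $\{i,j\}=\{1,2\}$; $f$ is admissible if such a pair exists. $R_0:=-f_{00}/f_{10}$ (undefined if $f_{10}=0$), $Z_\pm:=\frac12\big(-(f_{10}+f_{11}+f_{12})\pm\sqrt{(f_{10}+f_{11}+f_{12})^2+4(f_{02}-f_{00})}\big)$, $\beta_1^{lo}:=\max\{\lambda,R_0,Z_-\}$, $\beta_2^{hi}:=\min\{\lambda,R_0,Z_-\}$. For $s\in\{+,-,0\}$ let $\mathcal{I}_s:=\{I\in[0,1]:\operatorname{sign}(I+(1-I)f_2(I))=s\}$ and $Z_-(I)\le Z_+(I)$ the zeros of $h_f(\cdot,I)$; $\mathcal{Z}_-:=\{Z_-(I):I\in\mathcal{I}_-\}$, $\mathcal{Z}_0:=\{Z_-(I):I\in\mathcal{I}_+\}\cup\{Z_+(I):I\in\mathcal{I}_-\}\cup\{-P_f(I)/f_1(I):I\in\mathcal{I}_0,f_1(I)<0\}$; $\beta_2^{\max}:=\inf(\{\lambda\}\cup\mathcal{Z}_0)$, $\beta_2^{\min}:=\sup\mathcal{Z}_-$ if $\mathcal{Z}_-\ne\emptyset$, else $-\infty$. *)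

(* Defs.v *)
From HB Require Import structures.
From mathcomp Require Import all_boot all_order all_algebra.
From mathcomp Require Import all_classical all_reals all_analysis.
Set Implicit Arguments. Unset Strict Implicit. Unset Printing Implicit Defensive.
Import Order.TTheory GRing.Theory Num.Theory.
Local Open Scope classical_set_scope.
Local Open Scope ring_scope.

Section Model2.
Variable R : realType.
(* c i j is the coefficient f_{ij} of f(X,I) = sum_{i,j=0}^2 f_ij X^i I^j *)
Variable c : nat -> nat -> R.

Definition fk (k : nat) (I : R) : R := c k 0 + c k 1 * I + c k 2 * I ^+ 2.
Definition lam : R := c 0 0 + c 0 1 + c 0 2.
Definition kappa : R := - c 2 1.
Definition Ym : R :=
  (- (c 1 1 + c 1 2) - Num.sqrt ((c 1 1 + c 1 2) ^+ 2 + 4 * c 0 2)) / 2.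
Definition Pf (I : R) : R := c 0 0 - c 0 2 * I.
Definition qf (I : R) : R := I + (1 - I) * fk 2 I.
Definition hf (z I : R) : R := Pf I + z * fk 1 I + z ^+ 2 * qf I.

Definition Bplus : set R := [set z | lam <= z /\ forall I, 0 <= I <= 1 -> hf z I <= 0].
Definition Bminus : set R := [set z | z <= lam /\ forall I, 0 <= I <= 1 -> 0 <= hf z I].

Definition compatible (b1 b2 : R) : Prop :=
  b2 < b1 /\ b2 <= lam <= b1 /\
  (forall I, 0 <= I <= 1 -> 0 <= hf b1 I / (b2 - b1)) /\
  (forall I, 0 <= I <= 1 -> 0 <= hf b2 I / (b1 - b2)).
Definition admissible : Prop := exists b1 b2, compatible b1 b2.

Definition R0f : R := - c 0 0 / c 1 0.
Definition Zdisc : R := (c 1 0 + c 1 1 + c 1 2) ^+ 2 + 4 * (c 0 2 - c 0 0).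
Definition Zpl : R := (- (c 1 0 + c 1 1 + c 1 2) + Num.sqrt Zdisc) / 2.
Definition Zmi : R := (- (c 1 0 + c 1 1 + c 1 2) - Num.sqrt Zdisc) / 2.
Definition beta1lo : R := Num.max lam (Num.max R0f Zmi).
Definition beta2hi : R := Num.min lam (Num.min R0f Zmi).

Definition Iplus : set R := [set I | 0 <= I <= 1 /\ 0 < qf I].
Definition Iminus : set R := [set I | 0 <= I <= 1 /\ qf I < 0].
Definition Izero : set R := [set I | 0 <= I <= 1 /\ qf I = 0].

Definition is_Zminus_at (I z : R) : Prop :=
  hf z I = 0 /\ forall w, hf w I = 0 -> z <= w.
Definition is_Zplus_at (I z : R) : Prop :=
  hf z I = 0 /\ forall w, hf w I = 0 -> w <= z.

Definition calZm : set R := [set z | exists2 I, Iminus I & is_Zminus_at I z].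
Definition calZ0 : set R :=
  [set z | (exists2 I, Iplus I & is_Zminus_at I z)
        \/ (exists2 I, Iminus I & is_Zplus_at I z)
        \/ (exists2 I, Izero I & fk 1 I < 0 /\ z = - Pf I / fk 1 I)].

(* beta_2^max = inf ({lam} u Z_0), beta_2^min = sup Z_- (= -oo if Z_- empty) *)
Definition beta2max : \bar R :=
  ereal_inf [set x | x = lam%:E \/ exists2 z, calZ0 z & x = z%:E].
Definition beta2min : \bar R := ereal_sup [set x | exists2 z, calZm z & x = z%:E].

Definition model2 : Prop :=
  c 2 0 = 0 /\ c 2 2 = 0 /\ c 2 1 < 0 /\ c 0 2 <= 0 /\ c 1 0 <= 0 /\
  c 1 1 + c 1 2 <= 0 /\ 0 <= c 0 0 /\ 0 <= lam /\
  0 <= (c 1 1 + c 1 2) ^+ 2 + 4 * c 0 2 /\ c 1 2 = - kappa * Ym.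
End Model2.

(* Main.v *)
Require Import Defs.
From HB Require Import structures.
From mathcomp Require Import all_boot all_order all_algebra.
From mathcomp Require Import all_classical all_reals all_analysis.
From mathcomp Require Import ring lra.
Import Order.TTheory GRing.Theory Num.Theory.
Local Open Scope classical_set_scope.
Local Open Scope ring_scope.

Lemma Ym_facts {R : realType} {c : nat -> nat -> R} : model2 c ->
  0 <= Ym c /\ Ym c ^+ 2 + (c 1%N 1%N + c 1%N 2%N) * Ym c = c 0%N 2%N /\
  Ym c <= - (c 1%N 1%N + c 1%N 2%N) - Ym c.
Proof.
case=> [_ [_ [_ [h02 [_ [ha [_ [_ [hD _]]]]]]]]].
have sq := sqr_sqrtr hD. have s0 := sqrtr_ge0 ((c 1%N 1%N + c 1%N 2%N) ^+ 2 + 4 * c 0%N 2%N).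
rewrite /Ym.
set s := Num.sqrt _ in sq s0 *. set a := c 1%N 1%N + c 1%N 2%N in ha sq *.
split; last split.
- have : s <= - a by nra. lra.
- lra.
- lra.
Qed.

Lemma hf_eq {R : realType} {c : nat -> nat -> R} (z I : R) : model2 c ->
  hf c z I = c 0%N 0%N + c 1%N 0%N * z + I * (z - Ym c) *
    ((z - (- (c 1%N 1%N + c 1%N 2%N) - Ym c)) - kappa c * z * (1 - I)).
Proof.
move=> H; have [_ [hY _]] := Ym_facts H.
case: H => [h20 [h22 [_ [_ [_ [_ [_ [_ [_ h12]]]]]]]]].
rewrite /hf /Pf /qf /fk h20 h22 -hY h12 /kappa.
ring.
Qed.

Lemma R0_facts {R : realType} {c : nat -> nat -> R} : model2 c -> c 1%N 0%N != 0 ->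
  c 1%N 0%N < 0 /\ c 1%N 0%N * R0f c = - c 0%N 0%N /\ 0 <= R0f c.
Proof.
case=> [_ [_ [_ [_ [h10 [_ [h00 _]]]]]]] hn.
have hlt : c 1%N 0%N < 0 by rewrite lt_neqAle hn h10.
have e : c 1%N 0%N * R0f c = - c 0%N 0%N by rewrite /R0f; field.
split=> //; split=> //; nra.
Qed.

Lemma Pf_ge0 {R : realType} {c : nat -> nat -> R} (I : R) : model2 c -> 0 <= I ->
  0 <= Pf c I.
Proof.
case=> [_ [_ [_ [h02 [_ [_ [h00 _]]]]]]] hI; rewrite /Pf; nra.
Qed.

Lemma T2_ge0 {R : realType} {c : nat -> nat -> R} (w I : R) : model2 c ->
  0 <= I <= 1 -> 0 <= w <= Ym c ->
  0 <= I * (w - Ym c) * ((w - (- (c 1%N 1%N + c 1%N 2%N) - Ym c)) - kappa c * w * (1 - I)).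
Proof.
move=> H /andP[hI0 hI1] /andP[hw0 hw1].
have [_ [_ hYp]] := Ym_facts H.
have hk : 0 < kappa c by case: H => [_ [_ [h21 _]]]; rewrite /kappa; lra.
rewrite -mulrA mulr_ge0 // -mulrNN mulr_ge0 //; first lra.
have : 0 <= kappa c * w * (1 - I) by rewrite !mulr_ge0 //; lra.
lra.
Qed.

Lemma key_pos {R : realType} {c : nat -> nat -> R} (w I : R) : model2 c -> c 1%N 0%N != 0 ->
  0 <= I <= 1 -> 0 <= w -> w < Ym c -> w < R0f c -> 0 < hf c w I.
Proof.
move=> H hn hI hw hwY hwR.
have [h10 [e _]] := R0_facts H hn.
rewrite (hf_eq _ _ H).
have := T2_ge0 _ _ H hI (_ : 0 <= w <= Ym c).
rewrite hw ltW //= => /(_ isT).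
nra.
Qed.

Lemma key_nonneg {R : realType} {c : nat -> nat -> R} (w I : R) : model2 c -> c 1%N 0%N != 0 ->
  0 <= I <= 1 -> 0 <= w <= Ym c -> w <= R0f c -> 0 <= hf c w I.
Proof.
move=> H hn hI hw hwR.
have [h10 [e _]] := R0_facts H hn.
rewrite (hf_eq _ _ H).
have := T2_ge0 _ _ H hI hw.
nra.
Qed.

Lemma hf0 {R : realType} {c : nat -> nat -> R} (w : R) : model2 c -> hf c w 0 = c 0%N 0%N + c 1%N 0%N * w.
Proof. case=> [h20 _]; rewrite /hf /Pf /qf /fk h20; ring. Qed.

Lemma hf1 {R : realType} {c : nat -> nat -> R} (w : R) : 0 <= Zdisc c ->
  hf c w 1 = (w - Zmi c) * (w - Zpl c).
Proof.
move=> hD; have sq := sqr_sqrtr hD.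
rewrite /hf /Pf /qf /fk /Zmi /Zpl.
move: sq; rewrite /Zdisc; set s := Num.sqrt _ => sq.
lra.
Qed.

Lemma Zmi_le {R : realType} {c : nat -> nat -> R} : Zmi c <= Zpl c.
Proof. rewrite /Zmi /Zpl; have := sqrtr_ge0 (Zdisc c); lra. Qed.

Lemma hf_conv {R : realType} {c : nat -> nat -> R} (z I : R) : model2 c ->
  hf c z I = (1 - I) * hf c z 0 + I * hf c z 1 - kappa c * z * (z - Ym c) * I * (1 - I).
Proof. move=> H; rewrite !(hf_eq _ _ H); ring. Qed.

Lemma qf_eq {R : realType} {c : nat -> nat -> R} (I : R) : model2 c ->
  qf c I = I * (1 - kappa c * (1 - I)).
Proof. case=> [h20 [h22 _]]; rewrite /qf /fk /kappa h20 h22; ring. Qed.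

Lemma quad_small {R : realType} (A B C z : R) : A < 0 -> 0 <= C ->
  C + z * B + z ^+ 2 * A = 0 ->
  (forall w, C + w * B + w ^+ 2 * A = 0 -> z <= w) -> z <= 0.
Proof.
move=> hA hC hz hmin.
have hA0 : A != 0 by rewrite lt_eqF.
have := hmin (- B / A - z) _.
have -> : C + (- B / A - z) * B + (- B / A - z) ^+ 2 * A = C + z * B + z ^+ 2 * A.
  by field.
move=> /(_ hz) hle.
have hB : - B <= 2 * A * z.
  have h2 : 2 * z <= - B / A by lra.
  have eBA : (- B / A) * A = - B by field.
  nra.
rewrite leNgt; apply/negP => zpos.
have p1 : 0 <= z * (2 * A * z + B) by apply: mulr_ge0; lra.
have p2 : 0 < z * z by apply: mulr_gt0.
have p3 : A * (z * z) < 0 by rewrite pmulr_llt0.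
nra.
Qed.

Lemma quad_large {R : realType} (A B C z : R) : A < 0 -> 0 <= C ->
  C + z * B + z ^+ 2 * A = 0 ->
  (forall w, C + w * B + w ^+ 2 * A = 0 -> w <= z) -> 0 <= z.
Proof.
move=> hA hC hz hmax.
have : - z <= 0.
  apply: (quad_small A (- B) C (- z) hA hC).
    by rewrite -hz; ring.
  move=> w hw; rewrite lerNl; apply: hmax; rewrite -hw; ring.
lra.
Qed.

Lemma neg_pos {R : realType} {c : nat -> nat -> R} (z I : R) : model2 c ->
  0 <= I <= 1 -> 0 < qf c I -> z < 0 -> 0 < hf c z I.
Proof.
move=> H /andP[hI0 hI1] hq hz.
have [hY0 [_ hYp]] := Ym_facts H.
have hm := H; case: hm => [_ [_ [_ [_ [h10 [_ [h00 _]]]]]]].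
rewrite (qf_eq _ H) in hq.
rewrite (hf_eq _ _ H).
set t := 1 - kappa c * (1 - I) in hq *.
have hIp : 0 < I.
  rewrite lt_neqAle hI0 andbT; apply/negP => /eqP e; rewrite -e mul0r in hq; lra.
have ht : 0 < t by rewrite -(pmulr_rgt0 _ hIp).
have e : (z - (- (c 1%N 1%N + c 1%N 2%N) - Ym c)) - kappa c * z * (1 - I) =
   z * t - (- (c 1%N 1%N + c 1%N 2%N) - Ym c) by rewrite /t; ring.
rewrite e.
have h1 : z * t < 0 by nra.
have h2 : 0 < I * (Ym c - z) by nra.
have h3 : 0 < I * (Ym c - z) * ((- (c 1%N 1%N + c 1%N 2%N) - Ym c) - z * t).
  apply: mulr_gt0 => //; lra.
nra.
Qed.

Theorem proposition5p8 (R : realType) (c : nat -> nat -> R) :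
  model2 c ->
  c 1 0 != 0 ->
  0 <= Zdisc c ->
  ((beta2min c <= 0%:E)%E /\
   (0%:E <= (Num.min (Ym c) (Num.min (R0f c) (lam c)))%:E)%E /\
   ((Num.min (Ym c) (Num.min (R0f c) (lam c)))%:E <= beta2max c)%E /\
   (beta2max c <= (beta2hi c)%:E)%E) /\
  (Ym c <= R0f c <= Zpl c -> Ym c <= lam c <= Zpl c -> 0 < Zpl c ->
     [set z | 0 <= z <= Ym c] `<=` Bminus c /\
     [set z | beta1lo c <= z <= Zpl c] = Bplus c /\
     admissible c).
Proof.
move=> H hn hD.
have [hY0 [hYe hYp]] := Ym_facts H.
have [h10 [eR hR0]] := R0_facts H hn.
have hl0 : 0 <= lam c by case: H => [_ [_ [_ [_ [_ [_ [_ [hl _]]]]]]]].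
have Pf0 := fun I => Pf_ge0 I H.
split; [split; [|split; [|split]] | ].
- apply: ge_ereal_sup => x [z [I [hI hq] [hz hmin]] ->].
  rewrite lee_fin.
  apply: (quad_small (qf c I) (fk c 1 I) (Pf c I) z hq).
  + by apply: Pf0; case/andP: hI.
  + by rewrite -hz.
  + by move=> w hw; apply: hmin.
- rewrite lee_fin !le_min hY0 hR0 hl0 //.
- set m := Num.min _ _.
  have mY : m <= Ym c by rewrite /m ge_min lexx.
  have mR : m <= R0f c by rewrite /m ge_min ge_min lexx orbT.
  have mL : m <= lam c by rewrite /m ge_min ge_min lexx !orbT.
  apply: le_ereal_inf_tmp => x [->|[z hz ->]]; rewrite lee_fin //.
  rewrite leNgt; apply/negP => hzm.
  have zY : z < Ym c by apply: lt_le_trans hzm mY.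
  have zR : z < R0f c by apply: lt_le_trans hzm mR.
  case: hz => [[I [hI hq] [hz _]] | [[I [hI hq] [hz hmax]] | [I [hI hq] [hf1 ez]]]]; last subst z.
  + case: (leP 0 z) => z0.
      by have := key_pos z I H hn hI z0 zY zR; rewrite hz ltxx.
    by have := neg_pos z I H hI hq z0; rewrite hz ltxx.
  + have z0 : 0 <= z.
      apply: (quad_large (qf c I) (fk c 1 I) (Pf c I) z hq).
      * by apply: Pf0; case/andP: hI.
      * by rewrite -hz.
      * by move=> w hw; apply: hmax.
    by have := key_pos z I H hn hI z0 zY zR; rewrite hz ltxx.
  + have hP := Pf0 I (proj1 (andP hI)).
    have hfn : fk c 1 I != 0 by rewrite lt_eqF.
    have z0 : 0 <= - Pf c I / fk c 1 I.
      have -> : - Pf c I / fk c 1 I = Pf c I / (- fk c 1 I) by rewrite invrN mulrN mulNr.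
      apply: divr_ge0 => //; lra.
    have := key_pos _ I H hn hI z0 zY zR.
    have -> : hf c (- Pf c I / fk c 1 I) I = 0.
      by rewrite /hf hq; field.
    by rewrite ltxx.
- apply: ereal_inf_lbound.
  have mL : [set x | x = (lam c)%:E \/ exists2 z, calZ0 c z & x = z%:E] (lam c)%:E by left.
  have mR : [set x | x = (lam c)%:E \/ exists2 z, calZ0 c z & x = z%:E] (R0f c)%:E.
    right; exists (R0f c) => //; right; right; exists 0.
      by split; [rewrite lexx ler01 | rewrite (qf_eq _ H); ring].
    split; first by rewrite /fk; lra.
    by rewrite /R0f /Pf /fk; congr (_ / _); ring.
  have mZ : [set x | x = (lam c)%:E \/ exists2 z, calZ0 c z & x = z%:E] (Zmi c)%:E.
    right; exists (Zmi c) => //; left; exists 1.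
      by split; [rewrite ler01 lexx | rewrite (qf_eq _ H); lra].
    split; first by rewrite (hf1 _ hD); ring.
    move=> w; rewrite (hf1 _ hD) => hw.
    have := @Zmi_le _ c; nra.
  rewrite /beta2hi !minEle; by repeat case: ifP => _.
- move=> /andP[hYR hRZ] /andP[hYl hlZ] hZ.
  have hk : 0 < kappa c by case: H => [_ [_ [h21 _]]]; rewrite /kappa; lra.
  have hZm := @Zmi_le _ c.
  have Bpl : [set z | beta1lo c <= z <= Zpl c] = Bplus c.
    apply/seteqP; split => z /=.
    + rewrite /beta1lo !ge_max => /andP[/and3P[hlz hRz hMz] hzZ].
      split => // I /andP[hI0 hI1].
      rewrite (hf_conv _ _ H) (hf0 _ H) (hf1 _ hD).
      have a1 : c 1%N 0%N * z + c 0%N 0%N <= 0 by nra.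
      have a2 : (z - Zmi c) * (z - Zpl c) <= 0 by nra.
      have a3 : 0 <= kappa c * z * (z - Ym c) by rewrite mulr_ge0 ?mulr_ge0 //; lra.
      have a4 : 0 <= I * (1 - I) by rewrite mulr_ge0 //; lra.
      have a5 : (1 - I) * (c 0%N 0%N + c 1%N 0%N * z) <= 0 by rewrite mulr_ge0_le0 //; lra.
      have a6 : I * ((z - Zmi c) * (z - Zpl c)) <= 0 by rewrite mulr_ge0_le0.
      have a7 : 0 <= kappa c * z * (z - Ym c) * (I * (1 - I)) by rewrite mulr_ge0.
      nra.
    + case=> hlz hall.
      have h0 := hall 0 (_ : 0 <= 0 <= 1); rewrite lexx ler01 in h0.
      have h1 := hall 1 (_ : 0 <= 1 <= 1); rewrite lexx ler01 in h1.
      move: (h0 isT) (h1 isT); rewrite (hf0 _ H) (hf1 _ hD) => {}h0 {}h1.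
      have hRz : R0f c <= z by nra.
      have hMz : Zmi c <= z by nra.
      have hzZ : z <= Zpl c by nra.
      by rewrite /beta1lo !ge_max hlz hRz hMz hzZ.
  split; last split => //.
  + move=> z /= /andP[hz0 hzY]; split; first lra.
    move=> I hI; apply: key_nonneg => //; first by rewrite hz0 hzY.
    lra.
  + exists (Zpl c), 0; split => //; split; first by rewrite hl0 hlZ.
    split => I hI.
    * have : Bplus c (Zpl c).
        rewrite -Bpl /= lexx andbT /beta1lo !ge_max hlZ hRZ hZm.
        done.
      case=> _ /(_ I hI) hle.
      apply: mulr_le0 => //; rewrite invr_le0; lra.
    * have -> : hf c 0 I = Pf c I by rewrite /hf; ring.
      apply: divr_ge0; first by apply: Pf0; case/andP: hI.
      lra.
Qed.
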